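(* For every graph $G$: (1) if the cutset hypergraph $\mathcal{C}(G)$ is $1$-Sperner, then $G$ is connected-domishold; (2) if $G$ is connected-domishold, then $\mathcal{C}(G)$ is $2$-asummable.
   Context: A connected dominating set (CD set) of a connected graph $G$ is a set $S\subseteq V(G)$ that is dominating (every vertex outside $S$ has a neighbor in $S$) and induces a connected subgraph. A graph $G=(V,E)$ is connected-domishold if there exist $w:V\to\mathbb{R}_{\ge 0}$, $t\in\mathbb{R}_{\ge 0}$ such that for all $S\subseteq V$, $\sum_{x\in S}w(x)\ge t$ iff $S$ is a CD set; disconnected graphs are considered connected-domishold by convention. A cutset is a set $S\subseteq V(G)$ with $G-S$ disconnected; minimal if it contains no other cutset. The cutset hypergraph $\mathcal{C}(G)$ has vertex set $V(G)$ and hyperedges the minimal cutsets. A hypergraph is $1$-Sperner if for every two distinct hyperedges $e,f$, $\min\{|e\setminus f|,|f\setminus e|\}=1$. A hypergraph $\mathcal{H}=(V,E)$ is $2$-summable if there exist subsets $A_1,A_2\subseteq V$, each containing a hyperedge, and $B_1,B_2\subseteq V$, each containing no hyperedge, such that for every $v\in V$, $|\{i:v\in A_i\}|=|\{i:v\in B_i\}|$; it is $2$-asummable otherwise. *)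

(* Defs.v *)
From HB Require Import structures.
From Stdlib Require Import Reals.
From mathcomp Require Import all_boot.
Set Implicit Arguments. Unset Strict Implicit. Unset Printing Implicit Defensive.

Definition simple_graph (V : finType) (e : rel V) : Prop :=
  symmetric e /\ irreflexive e.

Definition induced_rel (V : finType) (e : rel V) (S : {set V}) : rel V :=
  [rel x y | [&& e x y, x \in S & y \in S]].

Definition connected_set (V : finType) (e : rel V) (S : {set V}) : bool :=
  [forall x in S, forall y in S, connect (induced_rel e S) x y].

Definition graph_connected (V : finType) (e : rel V) : Prop :=
  connected_set e [set: V].

Definition dominating (V : finType) (e : rel V) (S : {set V}) : Prop :=
  forall x, x \notin S -> exists2 y, y \in S & e x y.

Definition CD_set (V : finType) (e : rel V) (S : {set V}) : Prop :=
  dominating e S /\ connected_set e S.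

Definition weight (V : finType) (w : V -> R) (S : {set V}) : R :=
  \big[Rplus/R0]_(x in S) w x.

Definition connected_domishold (V : finType) (e : rel V) : Prop :=
  ~ graph_connected e \/
  exists (w : V -> R) (t : R),
    (forall x, Rle R0 (w x)) /\ Rle R0 t /\
    forall S : {set V}, Rle t (weight w S) <-> CD_set e S.

Definition cutset (V : finType) (e : rel V) (S : {set V}) : bool :=
  ~~ connected_set e (~: S).

Definition minimal_cutset (V : finType) (e : rel V) (S : {set V}) : bool :=
  cutset e S && [forall T : {set V}, (T \proper S) ==> ~~ cutset e T].

Definition hypergraph (V : finType) := {set {set V}}.

Definition cutset_hypergraph (V : finType) (e : rel V) : hypergraph V :=
  [set S : {set V} | minimal_cutset e S ].

Definition one_Sperner (V : finType) (H : hypergraph V) : Prop :=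
  forall E F, E \in H -> F \in H -> E != F ->
    minn #|E :\: F| #|F :\: E| = 1.

Definition contains_hyperedge (V : finType) (H : hypergraph V) (A : {set V}) : Prop :=
  exists2 E, E \in H & E \subset A.

Definition two_summable (V : finType) (H : hypergraph V) : Prop :=
  exists A1 A2 B1 B2 : {set V},
    contains_hyperedge H A1 /\ contains_hyperedge H A2 /\
    ~ contains_hyperedge H B1 /\ ~ contains_hyperedge H B2 /\
    forall v, (v \in A1) + (v \in A2) = (v \in B1) + (v \in B2).

Definition two_asummable (V : finType) (H : hypergraph V) : Prop :=
  ~ two_summable H.

(* Main.v *)
Require Import Defs.
From Stdlib Require Import Reals Lia Lra Classical.
From HB Require Import structures.
From mathcomp Require Import all_boot zify.
Set Implicit Arguments. Unset Strict Implicit. Unset Printing Implicit Defensive.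

Section Core.
Variable V : finType.
Implicit Types (X Y U E F A : {set V}) (u v : V) (H : {set {set V}}) (w : V -> nat).

Ltac msimp := rewrite ?inE /=; repeat match goal with
  | H : is_true (~~ (?a \in ?b)) |- context [?a \in ?b] => rewrite (negbTE H) /=
  | H : is_true (?a \in ?b) |- context [?a \in ?b] => rewrite H /=
  | H : is_true (?a != ?b) |- context [?a == ?b] => rewrite (negbTE H) /=
  | H : is_true (?a != ?b) |- context [?b == ?a] => rewrite eq_sym (negbTE H) /=
  end; rewrite ?eqxx ?orbT ?andbT ?orbF ?andbF /=.

Definition wt w X := \sum_(x in X) w x.
Definition cont H X : bool := [exists E in H, E \subset X].

Lemma wt_sub w X Y : X \subset Y -> wt w X <= wt w Y.
Proof.
move=> sXY; rewrite /wt [X in _ <= X](big_setID X) (setIidPr sXY); exact: leq_addr.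
Qed.

Lemma wt_strict w X Y v : X \subset Y -> v \in Y -> v \notin X ->
  (forall x, x \in Y -> 0 < w x) -> wt w X < wt w Y.
Proof.
move=> sXY vY vX pos; rewrite /wt [X in _ < X](big_setID X) (setIidPr sXY).
rewrite -addn1 leq_add2l (big_setD1 v) ?inE ?vX ?vY //.
by apply: leq_trans (leq_addr _ _); apply: pos.
Qed.

Lemma wt_compl w X : wt w X + wt w (~: X) = wt w setT.
Proof. by rewrite /wt [RHS](big_setID X) setTI setTD. Qed.

Lemma contP H X : reflect (exists2 E, E \in H & E \subset X) (cont H X).
Proof. exact: (iffP exists_inP) => [[E]|[E]]; exists E. Qed.

Lemma cont_sub H X Y : X \subset Y -> cont H X -> cont H Y.
Proof. by move=> sXY /contP[E HE sEX]; apply/contP; exists E; rewrite // (subset_trans sEX). Qed.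


Definition geqv H u v : bool :=
  [forall X : {set V}, ((u \notin X) && (v \notin X) && cont H (v |: X)) ==> cont H (u |: X)].

Lemma sperner H E F : one_Sperner H -> E \in H -> F \in H -> E \subset F -> E = F.
Proof.
move=> h1 HE HF sEF; apply/eqP; apply/negPn/negP => nEF.
have := h1 E F HE HF nEF.
have -> : E :\: F = set0 by apply/eqP; rewrite setD_eq0.
by rewrite cards0 min0n.
Qed.

Lemma one_dir H E F : one_Sperner H -> E \in H -> F \in H -> E != F ->
  #|E :\: F| = 1 \/ #|F :\: E| = 1.
Proof. move=> h1 HE HF nEF; have := h1 E F HE HF nEF; lia. Qed.

Lemma card1_sub E F v : #|E :\: F| = 1 -> v \in E -> v \notin F -> E :\ v \subset F.
Proof.
move=> /eqP/cards1P[x Ex] vE vF; have : v \in E :\: F by rewrite inE vE vF.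
rewrite Ex inE => /eqP vx; apply/subsetP => y; rewrite !inE => /andP[yv yE].
apply/negPn/negP => yF.
have : y \in E :\: F by rewrite inE yE yF.
by rewrite Ex inE -vx (negbTE yv).
Qed.

Lemma geqv_refl H u : geqv H u u.
Proof. by apply/forallP => X; apply/implyP => /andP[]. Qed.

Lemma geqvP H u v X : geqv H u v -> u \notin X -> v \notin X -> cont H (v |: X) -> cont H (u |: X).
Proof. by move=> /forallP/(_ X)/implyP h uX vX c; apply: h; rewrite uX vX c. Qed.

Lemma geqv_trans H u v x : geqv H u v -> geqv H v x -> geqv H u x.
Proof.
move=> huv hvx; apply/forallP => X; apply/implyP => /andP[/andP[uX xX] cX].
have [ux|ux] := eqVneq u x; first by subst.
case vX: (v \in X).
-
  have h1 : cont H (u |: (x |: (X :\ v))).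
    apply: (geqvP huv).
    + by msimp.
    + by msimp; apply/eqP => vx; subst; rewrite vX in xX.
    + apply: cont_sub cX; apply/subsetP => y; rewrite !inE.
      by case: (y == v) / eqP => [->|_] //=; rewrite ?vX ?orbT.
  have h2 : cont H (v |: (u |: (X :\ v))).
    apply: (geqvP hvx).
    + by msimp; apply/eqP => e; subst; rewrite vX in uX.
    + by msimp.
    + apply: cont_sub h1; apply/subsetP => y; rewrite !inE; by case/or3P => ->; rewrite ?orbT.
  apply: cont_sub h2; apply/subsetP => y; rewrite !inE.
  case/or3P => [/eqP->|->|/andP[_ ->]]; by rewrite ?vX ?orbT.
- apply: (geqvP huv) => //; first by rewrite vX.
  apply: (geqvP hvx) => //; by rewrite vX.
Qed.

Lemma geqv_total H u v : one_Sperner H -> geqv H u v || geqv H v u.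
Proof.
move=> h1; have [->|uv] := eqVneq u v; first by rewrite geqv_refl.
apply/negPn/negP; rewrite negb_or => /andP[/forallPn[X hX] /forallPn[Y hY]].
move: hX; rewrite negb_imply => /andP[/andP[/andP[uX vX] cX] nX].
move: hY; rewrite negb_imply => /andP[/andP[/andP[vY uY] cY] nY].
case/contP: cX => E HE sE; case/contP: cY => F HF sF.
have vE : v \in E.
  apply/negPn/negP => vE; move/negP: nX; apply; apply/contP; exists E => //.
  apply/subsetP => y yE; move/subsetP: sE => /(_ y yE); rewrite !inE.
  by case/orP => [/eqP yv|->]; [subst; rewrite yE in vE|rewrite orbT].
have uF : u \in F.
  apply/negPn/negP => uF; move/negP: nY; apply; apply/contP; exists F => //.
  apply/subsetP => y yF; move/subsetP: sF => /(_ y yF); rewrite !inE.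
  by case/orP => [/eqP yu|->]; [subst; rewrite yF in uF|rewrite orbT].
have uE : u \notin E.
  apply/negP => uE; move/subsetP: sE => /(_ u uE); rewrite !inE (negbTE uX) orbF.
  by rewrite (negbTE uv).
have vF : v \notin F.
  apply/negP => vF; move/subsetP: sF => /(_ v vF); rewrite !inE (negbTE vY) orbF.
  by rewrite eq_sym (negbTE uv).
have nEF : E != F by apply/eqP => EF; subst; rewrite vE in vF.
case: (one_dir h1 HE HF nEF) => [c|c].
- move/negP: nY; apply; apply/contP; exists E => //.
  have s := card1_sub c vE vF.
  apply/subsetP => y yE; rewrite !inE; case: (y == v) / eqP => //= yv.
  have yF : y \in F by apply: (subsetP s); rewrite !inE yE andbT; apply/eqP.
  move/subsetP: sF => /(_ y yF); rewrite !inE; case/orP => // /eqP yu.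
  by subst; rewrite yE in uE.
- move/negP: nX; apply; apply/contP; exists F => //.
  have s := card1_sub c uF uE.
  apply/subsetP => y yF; rewrite !inE; case: (y == u) / eqP => //= yu.
  have yE : y \in E by apply: (subsetP s); rewrite !inE yF andbT; apply/eqP.
  move/subsetP: sE => /(_ y yE); rewrite !inE; case/orP => // /eqP yv.
  by subst; rewrite yF in vF.
Qed.


Lemma top_exists H U u0 : one_Sperner H -> u0 \in U ->
  exists2 z, z \in U & forall v, v \in U -> geqv H z v.
Proof.
move=> h1 u0U.
pose S u := [set v in U | geqv H u v].
case: (@arg_maxnP _ u0 (mem U) (fun u => #|S u|) u0U) => z zU zmax.
exists z => // v vU; apply/negPn/negP => nzv.
have vz : geqv H v z by case/orP: (geqv_total z v h1) => //; rewrite (negbTE nzv).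
have : S z \proper S v.
  apply/properP; split.
    apply/subsetP => x; rewrite !inE => /andP[-> hx] /=; exact: geqv_trans vz hx.
  by exists v; rewrite !inE ?vU ?geqv_refl.
move/proper_card; have := zmax v vU; rewrite /=; lia.
Qed.

Lemma top_in_edge H U z E : one_Sperner H -> (forall v, v \in U -> geqv H z v) ->
  E \in H -> E \subset U -> E != set0 -> exists2 G, G \in H & z \in G.
Proof.
move=> h1 top HE sEU /set0Pn[v vE].
case zE: (z \in E); first by exists E.
have zv : z != v by apply/eqP => e; subst; rewrite vE in zE.
have [G HG sG] : exists2 G, G \in H & G \subset z |: (E :\ v).
  apply/contP; apply: (geqvP (X := E :\ v) (top v (subsetP sEU v vE))).
  - by msimp; rewrite zE.
  - by msimp.
  - apply/contP; exists E => //; apply/subsetP => y yE; msimp.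
    by case: eqP.
exists G => //; apply/negPn/negP => zG.
have GE : G \subset E.
  apply/subsetP => y yG; move/subsetP: sG => /(_ y yG); msimp.
  case/orP => [/eqP yz|/andP[]//]; by subst; rewrite yG in zG.
have eGE := sperner h1 HG HE GE; subst.
by have := subsetP sG v vE; msimp.
Qed.

Lemma top_good H U z E F : one_Sperner H -> (forall v, v \in U -> geqv H z v) ->
  (forall G, G \in H -> G \subset U) ->
  E \in H -> F \in H -> z \in E -> z \notin F -> E :\ z \subset F.
Proof.
move=> h1 top sub HE HF zE zF.
have nEF : E != F by apply/eqP => e; subst; rewrite zE in zF.
case: (one_dir h1 HE HF nEF) => c; first exact: card1_sub.
have /eqP/cards1P[y Fy] := c.
have : y \in F :\: E by rewrite Fy inE.
rewrite inE => /andP[yE yF].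
have zy : z != y by apply/eqP => e; subst; rewrite zE in yE.
have [G HG sG] : exists2 G, G \in H & G \subset z |: (F :\ y).
  apply/contP; apply: (geqvP (X := F :\ y) (top y (subsetP (sub F HF) y yF))).
  - by msimp.
  - by msimp.
  - apply/contP; exists F => //; apply/subsetP => x xF; msimp; by case: eqP.
have sFE := card1_sub c yF yE.
have GE : G \subset E.
  apply/subsetP => x xG; move/subsetP: sG => /(_ x xG); rewrite !inE.
  case/orP => [/eqP->//|xFy]; apply: (subsetP sFE); by rewrite !inE.
have eGE := sperner h1 HG HE GE; subst.
apply/subsetP => x; rewrite !inE => /andP[xz xE].
move/subsetP: sG => /(_ x xE); rewrite !inE (negbTE xz) /=.
by case/andP.
Qed.


Lemma wt_ind f X A : \sum_(x in X) (if x \in A then f x else 0) = wt f (X :&: A).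
Proof.
rewrite (big_setID A) /= [X in _ + X]big1 ?addn0.
  by apply: eq_bigr => x; rewrite inE => /andP[_ ->].
by move=> x; rewrite inE => /andP[/negbTE -> _].
Qed.

Lemma cont_restr H A X : (forall E, E \in H -> E \subset A) -> cont H X = cont H (X :&: A).
Proof.
move=> sub; apply/contP/contP => [[E HE sE]|[E HE sE]]; exists E => //.
  by rewrite subsetI sE sub.
exact: subset_trans sE (subsetIl _ _).
Qed.

Definition sepw H U w := (forall x, x \in U -> 0 < w x) /\
  (forall X Y, X \subset U -> Y \subset U -> cont H X -> ~~ cont H Y -> wt w Y < wt w X).

Lemma triv_case H U : ~~ [exists E in H, E != set0] -> exists w, sepw H U w.
Proof.
move=> /exists_inPn h; exists (fun _ => 1); split => // X Y _ _ /contP[E HE _] /negP[].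
apply/contP; exists E => //; move: (h E HE); rewrite negbK => /eqP ->; exact: sub0set.
Qed.


Lemma mul_lt (a p q : nat) : p < q -> a * p + a <= a * q.
Proof. by move=> h; have := leq_mul (leqnn a) h; rewrite mulnS addnC. Qed.

Lemma ar_Ai (a ay ax b qY qX S2 : nat) : ay + a <= ax -> qY <= S2 -> a = S2.*2+2 -> ay + b + qY < ax + b + qX.
Proof. lia. Qed.
Lemma ar_Aii (aW am ax b qY qX S2 : nat) : am <= ax -> am <= aW -> b = aW - am + S2 + 1 -> qY <= S2 -> aW + 0 + qY < ax + b + qX.
Proof. lia. Qed.
Lemma ar_Aiii (a ay aW am ax b qY qX S2 : nat) : ay + a <= aW -> am <= ax -> am <= aW -> b = aW - am + S2 + 1 -> qY <= S2 -> ay + 0 + qY < ax + b + qX.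
Proof. lia. Qed.
Lemma ar_Bi (a ay am aW b c qY qX S2 : nat) : ay + a <= am -> am <= aW -> b = aW - am + S2 + 1 -> qY <= S2 -> a = S2.*2+2 -> ay + b + qY < aW + c + qX.
Proof. lia. Qed.
Lemma ar_Bii (aW c qY qX : nat) : qY < qX -> aW + 0 + qY < aW + c + qX.
Proof. lia. Qed.
Lemma ar_Biii (a ay aW c qY qX S2 : nat) : ay + a <= aW -> qY <= S2 -> a = S2.*2+2 -> ay + 0 + qY < aW + c + qX.
Proof. lia. Qed.

Lemma step H U :
  (forall U' (H' : {set {set V}}), #|U'| < #|U| -> (forall E, E \in H' -> E \subset U') ->
     one_Sperner H' -> exists w, sepw H' U' w) ->
  (forall E, E \in H -> E \subset U) -> one_Sperner H -> exists w, sepw H U w.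
Proof.
move=> IH sub h1.
case: (boolP [exists E in H, E != set0]) => [/exists_inP[E0 HE0 nE0]|]; last exact: triv_case.
have [u0 u0E0] := set0Pn _ nE0.
have u0U := subsetP (sub E0 HE0) u0 u0E0.
have [z zU top] := top_exists h1 u0U.
have [G0 HG0 zG0] := top_in_edge h1 top HE0 (sub E0 HE0) nE0.
pose V1 := \bigcup_(E | (E \in H) && (z \in E)) (E :\ z).
pose V2 := (U :\: V1) :\ z.
pose H1 := [set E :\ z | E in [set E in H | z \in E]].
pose H2 := [set F :\: V1 | F in [set F in H | z \notin F]].
have zV1 : z \notin V1 by apply/bigcupP => -[E _]; rewrite !inE eqxx.
have V1U : V1 \subset U.
  apply/bigcupsP => E /andP[HE _]; exact: subset_trans (subsetDl _ _) (sub E HE).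
have good : forall F, F \in H -> z \notin F -> V1 \subset F.
  move=> F HF zF; apply/bigcupsP => E /andP[HE zE]; exact: top_good h1 top sub HE HF zE zF.
have cV1 : #|V1| < #|U|.
  by apply: proper_card; apply/properP; split => //; exists z.
have cV2 : #|V2| < #|U|.
  apply: proper_card; apply/properP; split.
    by apply/subsetP => x; rewrite !inE => /andP[_ /andP[_ ->]].
  by exists z; rewrite // !inE eqxx.
have sub1 : forall E, E \in H1 -> E \subset V1.
  move=> E' /imsetP[E]; rewrite inE => /andP[HE zE] ->.
  by apply: (bigcup_sup E); rewrite HE zE.
have sub2 : forall F, F \in H2 -> F \subset V2.
  move=> F' /imsetP[F]; rewrite inE => /andP[HF zF] ->; apply/subsetP => x; rewrite !inE.
  move=> /andP[xV1 xF]; rewrite xV1 (subsetP (sub F HF) x xF) !andbT.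
  by apply/eqP => e; subst; rewrite xF in zF.
have h11 : one_Sperner H1.
  move=> E' F' /imsetP[E]; rewrite inE => /andP[HE zE] -> /imsetP[F]; rewrite inE => /andP[HF zF] -> ne.
  have ne' : E != F by apply: contraNneq ne => ->.
  have eq1 : (E :\ z) :\: (F :\ z) = E :\: F.
    by apply/setP => x; rewrite !inE; case: (x =P z) => [->|]; rewrite ?zE ?zF.
  have eq2 : (F :\ z) :\: (E :\ z) = F :\: E.
    by apply/setP => x; rewrite !inE; case: (x =P z) => [->|]; rewrite ?zE ?zF.
  by rewrite eq1 eq2; apply: h1.
have h12 : one_Sperner H2.
  move=> E' F' /imsetP[E]; rewrite inE => /andP[HE zE] -> /imsetP[F]; rewrite inE => /andP[HF zF] -> ne.
  have ne' : E != F by apply: contraNneq ne => ->.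
  have gE := good E HE zE; have gF := good F HF zF.
  have eq1 : (E :\: V1) :\: (F :\: V1) = E :\: F.
    apply/setP => x; rewrite !inE; case xV1: (x \in V1) => //=.
    by rewrite (subsetP gF x xV1).
  have eq2 : (F :\: V1) :\: (E :\: V1) = F :\: E.
    apply/setP => x; rewrite !inE; case xV1: (x \in V1) => //=.
    by rewrite (subsetP gE x xV1).
  by rewrite eq1 eq2; apply: h1.
have [w1 [pos1 sep1]] := IH V1 H1 cV1 sub1 h11.
have [w2 [pos2 sep2]] := IH V2 H2 cV2 sub2 h12.
have E10 : G0 :\ z \in H1 by apply/imsetP; exists G0 => //; rewrite inE HG0 zG0.
have [E1 HE1 E1min] : exists2 E1, E1 \in H1 & forall E, E \in H1 -> wt w1 E1 <= wt w1 E.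
  by case: (@arg_minnP _ _ (mem H1) (wt w1) E10) => E HE Emin; exists E.
pose m1 := wt w1 E1. pose W1 := wt w1 V1. pose S2 := wt w2 V2.
pose a := S2.*2 + 2. pose b := a * W1 - a * m1 + S2 + 1.
pose w x := if x \in V1 then a * w1 x else if x == z then b else w2 x.
have equiv : forall X, cont H X = ((z \in X) && cont H1 X) || ((V1 \subset X) && cont H2 X).
  move=> X; apply/contP/orP.
  - case=> E HE sEX; case zE: (z \in E).
    + left; rewrite (subsetP sEX z zE); apply/contP; exists (E :\ z).
        by apply/imsetP; exists E => //; rewrite inE HE zE.
      exact: subset_trans (subsetDl _ _) sEX.
    + right; have gE := good E HE (negbT zE).
      rewrite (subset_trans gE sEX); apply/contP; exists (E :\: V1).
        by apply/imsetP; exists E => //; rewrite inE HE zE.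
      exact: subset_trans (subsetDl _ _) sEX.
  - case=> /andP[zX /contP[E' /imsetP[E]]]; rewrite inE => /andP[HE zE] -> sE; exists E => //.
    + apply/subsetP => x xE; case: (x =P z) => [->//|/eqP xz].
      by apply: (subsetP sE); rewrite !inE xz xE.
    + apply/subsetP => x xE; case xV1: (x \in V1); first exact: (subsetP zX).
      by apply: (subsetP sE); rewrite !inE xV1 xE.
have dec : forall X, X \subset U -> wt w X =
    a * wt w1 (X :&: V1) + (if z \in X then b else 0) + wt w2 (X :&: V2).
  move=> X sXU.
  have -> : wt w X = \sum_(x in X) ((if x \in V1 then a * w1 x else 0) +
      (if x \in [set z] then b else 0) + (if x \in V2 then w2 x else 0)).
    apply: eq_bigr => x xX; rewrite /w; have xU := subsetP sXU x xX.
    case: (boolP (x \in V1)) => xV1.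
      have xz : x != z by apply/eqP => e; subst; rewrite xV1 in zV1.
      by rewrite !inE (negbTE xz) xV1 /= !addn0.
    rewrite !inE xV1 xU /=; case: (x =P z) => //= _; by rewrite addn0.
  rewrite !big_split /= (wt_ind (fun x => a * w1 x)) (wt_ind (fun _ => b)) wt_ind.
  have -> : wt (fun x => a * w1 x) (X :&: V1) = a * wt w1 (X :&: V1).
    by rewrite /wt [RHS]big_distrr.
  case zX: (z \in X).
    have -> : X :&: [set z] = [set z] by apply/setIidPr; rewrite sub1set.
    by rewrite /wt big_set1.
  have -> : X :&: [set z] = set0.
    by apply/setP => x; rewrite !inE; case: (x =P z) => [->|]; rewrite ?zX ?andbF.
  by rewrite /wt big_set0.
exists w; split.
  move=> x xU; rewrite /w; case: ifP => xV1.
    by rewrite muln_gt0 pos1 // andbT /a addn2.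
  case: eqP => [_|/eqP xz]; first by rewrite /b addn1.
  by apply: pos2; rewrite !inE xz xV1 xU.
move=> X Y sXU sYU cX nY; rewrite (dec X sXU) (dec Y sYU).
have c1r : forall A, cont H1 A = cont H1 (A :&: V1) := fun A => cont_restr A sub1.
have c2r : forall A, cont H2 A = cont H2 (A :&: V2) := fun A => cont_restr A sub2.
have m1le : forall A, cont H1 A -> m1 <= wt w1 (A :&: V1).
  move=> A /contP[E HE sE]; apply: leq_trans (E1min E HE) (wt_sub _ _).
  by rewrite subsetI sE sub1.
have ltm1 : forall A, ~~ cont H1 A -> wt w1 (A :&: V1) < m1.
  move=> A nA; apply: sep1; rewrite ?subsetIr ?sub1 //; last by rewrite -c1r.
  by apply/contP; exists E1.
have m1W : m1 <= W1 := wt_sub w1 (sub1 E1 HE1).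
have pW : forall A, wt w1 (A :&: V1) <= W1 := fun A => wt_sub w1 (subsetIr A V1).
have pWs : forall A, ~~ (V1 \subset A) -> wt w1 (A :&: V1) < W1.
  move=> A /subsetPn[v vV1 vA]; apply: (@wt_strict _ _ _ v) (subsetIr _ _) vV1 _ pos1.
  by rewrite inE (negbTE vA).
have pWe : forall A, V1 \subset A -> wt w1 (A :&: V1) = W1.
  by move=> A s; rewrite (setIidPr s).
have qS : forall A, wt w2 (A :&: V2) <= S2 := fun A => wt_sub w2 (subsetIr A V2).
have c1full : forall A, V1 \subset A -> cont H1 A.
  move=> A s; apply/contP; exists E1 => //; exact: subset_trans (sub1 E1 HE1) s.
have sep2' : forall A B, cont H2 A -> ~~ cont H2 B -> wt w2 (B :&: V2) < wt w2 (A :&: V2).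
  move=> A B cA nB; apply: sep2; rewrite ?subsetIr // -?c2r //.
move: cX nY; rewrite !equiv negb_or !negb_and.
have hb : b = a * W1 - a * m1 + S2 + 1 by [].
have ha : a = S2.*2 + 2 by [].
have am1W := leq_mul (leqnn a) m1W.
have qX := qS X; have qY := qS Y.
case/orP => [/andP[zX c1X]|/andP[V1X c2X]] /andP[nY1 nY2].
- rewrite zX; case zY: (z \in Y); move: nY1; rewrite zY /= => nY1.
  + exact: ar_Ai (mul_lt a (leq_trans (ltm1 Y nY1) (m1le X c1X))) qY ha.
  + have am1X := leq_mul (leqnn a) (m1le X c1X).
    case V1Y: (V1 \subset Y).
      by rewrite (pWe Y V1Y); exact: ar_Aii am1X am1W hb qY.
    exact: ar_Aiii (mul_lt a (pWs Y (negbT V1Y))) am1X am1W hb qY.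
- rewrite (pWe X V1X); case zY: (z \in Y); move: nY1; rewrite zY /= => nY1.
  + exact: ar_Bi (mul_lt a (ltm1 Y nY1)) am1W hb qY ha.
  + case V1Y: (V1 \subset Y).
      rewrite (pWe Y V1Y); rewrite V1Y /= in nY2; exact: ar_Bii (sep2' X Y c2X nY2).
    exact: ar_Biii (mul_lt a (pWs Y (negbT V1Y))) qY ha.
Qed.

Lemma core n U H : #|U| <= n -> (forall E, E \in H -> E \subset U) -> one_Sperner H ->
  exists w, sepw H U w.
Proof.
elim: n U H => [|n IHn] U H cU sub h1.
  by apply: step => // U' H' c'; lia.
by apply: step => // U' H' c' sub' h1'; apply: IHn => //; lia.
Qed.

End Core.

Section Graph.
Variables (V : finType) (e : rel V).
Hypothesis esym : symmetric e.
Hypothesis eirr : irreflexive e.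
Implicit Types (S C X : {set V}).

Definition domb S : bool := [forall x, (x \notin S) ==> [exists y, (y \in S) && e x y]].

Lemma dombP S : reflect (dominating e S) (domb S).
Proof.
apply: (iffP forallP) => [h x xS|h x].
  by have /implyP/(_ xS)/existsP[y /andP[]] := h x; exists y.
by apply/implyP => xS; have [y yS exy] := h x xS; apply/existsP; exists y; rewrite yS.
Qed.

Definition CDb S := domb S && connected_set e S.

Lemma CDbP S : reflect (CD_set e S) (CDb S).
Proof. by apply: (iffP andP) => -[/dombP h1 h2]; split => //; apply/dombP. Qed.

Lemma ind_sym S : symmetric (induced_rel e S).
Proof. by move=> x y; rewrite /induced_rel /= esym; case: (x \in S); case: (y \in S); rewrite ?andbF ?andbT. Qed.

Lemma G1 C S : cutset e C -> S \subset ~: C -> ~ CD_set e S.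
Proof.
move=> cC sSC [dS cS].
move: cC; rewrite /cutset /connected_set => /forall_inPn[a aC /forall_inPn[b bC nab]].
set r := induced_rel e (~: C) in nab.
case: (set_0Vmem S) => [S0|[s sS]].
  have aS : a \notin S by rewrite S0 inE.
  by have [y] := dS a aS; rewrite S0 inE.
have toS : forall x, x \in ~: C -> connect r x s.
  have sub : forall x y, x \in S -> connect (induced_rel e S) x y -> connect r x y.
    move=> x y _; apply: connect_sub => u v; rewrite /induced_rel /= => /and3P[euv uS vS].
    by apply: connect1; rewrite /r /induced_rel /= euv !(subsetP sSC).
  move=> x xC; case xS: (x \in S).
    apply: sub => //; exact: (forall_inP (forall_inP cS x xS) s sS).
  have [y yS exy] := dS x (negbT xS).
  apply: (connect_trans (y := y)).
    by apply: connect1; rewrite /r /induced_rel /= exy xC (subsetP sSC).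
  apply: sub => //; exact: (forall_inP (forall_inP cS y yS) s sS).
have csym : connect_sym r by apply: sym_connect_sym; exact: ind_sym.
move/negP: nab; apply; apply: connect_trans (toS a aC) _.
by rewrite csym; apply: toS.
Qed.

Lemma noout (r : rel V) x y : (forall y, ~~ r x y) -> connect r x y -> y = x.
Proof.
move=> h /connectP[[|y1 p] /= hp ->] //.
by move: hp => /andP[rxy1 _]; move: (h y1); rewrite rxy1.
Qed.

Lemma G2 S : ~ CD_set e S -> S = set0 \/ exists2 C, cutset e C & C \subset ~: S.
Proof.
move=> nCD.
case cS: (connected_set e S); last first.
  right; exists (~: S) => //; by rewrite /cutset setCK cS.
have /forallPn[x] : ~~ domb S by apply/negP => d; apply: nCD; apply/CDbP; rewrite /CDb d cS.
rewrite negb_imply => /andP[xS /existsPn nx].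
pose N := [set y | e x y].
case: (boolP [exists y, (y != x) && ~~ e x y]) => [/existsP[y0 /andP[y0x ny0]]|/existsPn hall].
- right; exists N; last first.
    apply/subsetP => y; rewrite !inE => exy; apply/negP => yS.
    by move: (nx y); rewrite yS exy.
  rewrite /cutset /connected_set; apply/forall_inPn; exists x; first by rewrite !inE eirr.
  apply/forall_inPn; exists y0; first by rewrite !inE.
  apply/negP => /noout h.
  have : y0 = x.
    apply: h => y; rewrite /induced_rel /= !inE; by case: (e x y); rewrite ?andbF.
  by move/eqP; rewrite (negbTE y0x).
- left; apply/setP => y; rewrite inE; apply/negP => yS.
  have yx : y != x by apply/eqP => e'; subst; rewrite yS in xS.
  move: (hall y) (nx y); rewrite yx yS /= negbK => -> //.
Qed.

Lemma G3 C : cutset e C -> exists2 E, minimal_cutset e E & E \subset C.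
Proof.
move: {2}#|C| (leqnn #|C|) => n; elim: n C => [|n IH] C cC cut.
  exists C => //; rewrite /minimal_cutset cut /=; apply/forallP => T; apply/implyP => /proper_card; lia.
case mC: (minimal_cutset e C); first by exists C.
move: mC; rewrite /minimal_cutset cut /= => /forallPn[T]; rewrite negb_imply negbK => /andP[pT cT].
have cTn : #|T| <= n by have := proper_card pT; lia.
have [E mE sE] := IH T cTn cT.
by exists E => //; exact: subset_trans sE (proper_sub pT).
Qed.

Lemma contH X : cont (cutset_hypergraph e) X <-> exists2 C, cutset e C & C \subset X.
Proof.
split => [/contP[E] | [C cC sC]].
  by rewrite inE => /andP[cE _] sE; exists E.
have [E mE sE] := G3 cC; apply/contP; exists E; first by rewrite inE.
exact: subset_trans sE sC.
Qed.

End Graph.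

HB.instance Definition _ := Monoid.isComLaw.Build R R0 Rplus (fun x y z => esym (Rplus_assoc x y z)) Rplus_comm Rplus_0_l.

Lemma weight_INR (V : finType) (w : V -> nat) S :
  weight (fun x => INR (w x)) S = INR (wt w S).
Proof.
rewrite /weight /wt; apply: esym; apply: (big_morph INR); last by [].
by move=> x y; rewrite plus_INR.
Qed.

Lemma wsum2 (V : finType) (w : V -> R) S1 S2 :
  Rplus (weight w S1) (weight w S2) =
  \big[Rplus/R0]_x Rmult (w x) (INR ((x \in S1) + (x \in S2))).
Proof.
rewrite /weight (big_mkcond (fun x => x \in S1)) (big_mkcond (fun x => x \in S2)) -big_split.
apply: eq_bigr => x _; case: (x \in S1); case: (x \in S2); rewrite /=; lra.
Qed.

Theorem mainTheorem2 (V : finType) (e : rel V) (He : simple_graph e) :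
  (one_Sperner (cutset_hypergraph e) -> connected_domishold e) /\
  (connected_domishold e -> two_asummable (cutset_hypergraph e)).
Proof.
case: He => esym eirr; split.
- move=> h1; case conn: (connected_set e [set: V]); last by left; rewrite /graph_connected conn.
  right.
  have [w [pos sep]] := @core V #|[set: V]| [set: V] (cutset_hypergraph e) (leqnn _)
     (fun E _ => subsetT E) h1.
  have K : forall S S', CD_set e S -> ~ CD_set e S' -> wt w S' < wt w S.
    move=> S S' cdS ncd.
    case: (G2 eirr ncd) => [S0|[C cC sC]].
      subst S'; case: (set_0Vmem S) => [Se|[v vS]].
        by subst; exfalso; apply: ncd.
      by apply: (@wt_strict _ _ _ _ v) => //; [exact: sub0set | rewrite inE | move=> x _; apply: pos; rewrite inE].
    have c1 : cont (cutset_hypergraph e) (~: S') by apply/contH; exists C.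
    have c2 : ~~ cont (cutset_hypergraph e) (~: S).
      apply/negP => /contH[C' cC' sC'].
      by apply: (G1 esym cC' _ cdS); rewrite -(setCK S) setCS.
    have := sep _ _ (subsetT _) (subsetT _) c1 c2.
    have := wt_compl w S; have := wt_compl w S'; lia.
  have cdT : CDb e [set: V].
    by rewrite /CDb conn andbT; apply/dombP => x; rewrite inE.
  case: (@arg_minnP _ _ (CDb e) (wt w) cdT) => S0 cd0 min0.
  exists (fun x => INR (w x)), (INR (wt w S0)); split; first by move=> x; apply: pos_INR.
  split; first by apply: pos_INR.
  move=> S; rewrite weight_INR; split.
    move=> /INR_le /leP h; apply/(CDbP e); apply/negPn/negP => ncd.
    have := K _ _ (elimT (CDbP e S0) cd0) (fun c => (negP ncd) (introT (CDbP e S) c)).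
    lia.
  move/(introT (CDbP e S)) => cdS; apply: le_INR; apply/leP; exact: min0.
- case => [nconn|[w [t [wpos [tpos wiff]]]]] [A1 [A2 [B1 [B2 [hA1 [hA2 [hB1 [hB2 hsum]]]]]]]].
    apply: hB1; exists set0; last exact: sub0set.
    rewrite inE /minimal_cutset /cutset setC0.
    have -> : connected_set e [set: V] = false by apply/negP.
    by apply/forallP => T; apply/implyP => /proper_card; rewrite cards0.
  have Aneg : forall A, contains_hyperedge (cutset_hypergraph e) A -> Rlt (weight w (~: A)) t.
    move=> A [E]; rewrite inE => /andP[cE _] sEA.
    apply: Rnot_le_lt => /wiff; apply: (G1 esym cE); by rewrite setCS.
  have Bpos : forall B, ~ contains_hyperedge (cutset_hypergraph e) B -> Rle t (weight w (~: B)).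
    move=> B nB; apply/wiff.
    case: (classic (CD_set e (~: B))) => // ncd; exfalso.
    case: (G2 eirr ncd) => [B0|[C cC sC]].
      apply: nB; case: hA1 => E HE sE; exists E => //.
      have -> : B = [set: V] by rewrite -(setCK B) B0 setC0.
      exact: subsetT.
    apply: nB; have [E mE sE] := G3 cC; exists E; first by rewrite inE.
    by rewrite -(setCK B); exact: subset_trans sE sC.
  have eqs : Rplus (weight w (~: A1)) (weight w (~: A2)) = Rplus (weight w (~: B1)) (weight w (~: B2)).
    rewrite !wsum2; apply: eq_bigr => x _.
    have hc : (x \in ~: A1) + (x \in ~: A2) = (x \in ~: B1) + (x \in ~: B2).
      move: (hsum x); rewrite !inE; case: (x \in A1); case: (x \in A2); case: (x \in B1);
        case: (x \in B2) => /=; lia.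
    by rewrite hc.
  have := Aneg _ hA1; have := Aneg _ hA2; have := Bpos _ hB1; have := Bpos _ hB2.
  move=> ? ? ? ?; lra.
Qed.
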